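(* Let $G$ be a graph, $k\in\mathbb N$, and let $\mathcal F$ be a set of stars in $\vec S_k(G)$ all of which have finite interior. Let $X$ be a critical vertex set of $G$ with $|X|\ge k$. Then $\tau:=\{(A,B)\in\vec S_k(G): X\subseteq B\}$ is a principal $\mathcal F$-tangle of $S_k(G)$. In particular, if $\sigma\subseteq\vec S_k(G)$ is a star with $X\subseteq\mathrm{int}(\sigma)$, then $\sigma\subseteq\tau$.
   Context: Graphs may be infinite. A separation of $G$ is a set $\{A,B\}$ with $A,B\subseteq V(G)$, $A\cup B=V(G)$ and no edge of $G$ between $A\setminus B$ and $B\setminus A$; its order is $|A\cap B|$. $S_k(G)$ is the set of separations of order $<k$ and $\vec S_k(G)$ the set of their orientations $(A,B)$, $(B,A)$. Order: $(A,B)\le(C,D)$ iff $A\subseteq C$ and $B\supseteq D$. An orientation of $S_k(G)$ is a set containing exactly one orientation of each element; consistent if there are no distinct $\{A,B\},\{C,D\}\in S_k(G)$ with $(A,B)<(C,D)$, $(B,A)\in O$, $(C,D)\in O$; principal if for every set $Y$ of fewer than $k$ vertices it contains $(V(G)\setminus V(K),V(K)\cup Y)$ for some component $K$ of $G-Y$. A star is a set $\sigma$ of oriented finite-order separations, not containing $(V(G),V(G))$, with $(A,B)\le(D,C)$ for distinct $(A,B),(C,D)\in\sigma$; its interior is $\mathrm{int}(\sigma)=\bigcap_{(A,B)\in\sigma}B$. An $\mathcal F$-tangle of $S_k(G)$ is a consistent orientation of $S_k(G)$ having no element of $\mathcal F$ as a subset. A critical vertex set of $G$ is a finite set $X\subseteq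 V(G)$ such that infinitely many components $K$ of $G-X$ satisfy $N_G(K)=X$. *)

(* Defs.v *)
From HB Require Import structures.
From mathcomp Require Import all_boot.
From mathcomp Require Import boolp classical_sets cardinality.
From Stdlib Require Import Relations.
Set Implicit Arguments. Unset Strict Implicit. Unset Printing Implicit Defensive.
Local Open Scope classical_set_scope.

Record graph := Graph {
  vert :> Type;
  adj : vert -> vert -> Prop;
  adj_sym : forall x y, adj x y -> adj y x;
  adj_irr : forall x, ~ adj x x }.

Definition card_lt {T} (A : set T) (k : nat) : Prop :=
  exists n, (n < k)%N /\ card_eq A `I_n.

Section Sep.
Variable G : graph.
Notation V := (vert G).
Definition osep := (set V * set V)%type.

Definition is_sep (A B : set V) : Prop :=
  A `|` B = setT /\
  forall x y, (A `\` B) x -> (B `\` A) y -> ~ adj x y.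

Definition order_lt (A B : set V) (k : nat) : Prop := card_lt (A `&` B) k.

Definition vecS (k : nat) : set osep :=
  [set s | is_sep s.1 s.2 /\ order_lt s.1 s.2 k].

Definition vecS_fin : set osep :=
  [set s | is_sep s.1 s.2 /\ finite_set (s.1 `&` s.2)].

Definition sle (s t : osep) : Prop := s.1 `<=` t.1 /\ t.2 `<=` s.2.
Definition slt (s t : osep) : Prop := sle s t /\ s <> t.

Definition inv (s : osep) : osep := (s.2, s.1).

Definition usep_eq (s t : osep) : Prop := s = t \/ s = inv t.

(* O is an orientation of S_k(G): O consists of oriented separations in
   \vec S_k(G) and contains exactly one orientation of each {A,B} in S_k(G). *)
Definition orientation (k : nat) (O : set osep) : Prop :=
  O `<=` vecS k /\
  forall s, vecS k s -> (O s \/ O (inv s)) /\ (O s -> O (inv s) -> s = inv s).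

Definition consistent (k : nat) (O : set osep) : Prop :=
  ~ exists s t, vecS k s /\ vecS k t /\ ~ usep_eq s t /\
      slt s t /\ O (inv s) /\ O t.

Definition step_out (Y : set V) (u v : V) : Prop := adj u v /\ ~ Y u /\ ~ Y v.

Definition component (Y : set V) (K : set V) : Prop :=
  exists x, ~ Y x /\
    K = [set y | ~ Y y /\ clos_refl_trans V (step_out Y) x y].

Definition nbhd (K : set V) : set V :=
  [set y | ~ K y /\ exists x, K x /\ adj x y].

Definition principal (k : nat) (O : set osep) : Prop :=
  forall Y : set V, card_lt Y k ->
    exists K, component Y K /\ O (~` K, K `|` Y).

Definition star (sigma : set osep) : Prop :=
  sigma `<=` vecS_fin /\ ~ sigma (setT, setT) /\
  forall s t, sigma s -> sigma t -> s <> t -> sle s (inv t).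

Definition interior (sigma : set osep) : set V :=
  [set x | forall s, sigma s -> s.2 x].

Definition F_tangle (k : nat) (F : set (set osep)) (O : set osep) : Prop :=
  orientation k O /\ consistent k O /\ forall sigma, F sigma -> ~ sigma `<=` O.

Definition critical (X : set V) : Prop :=
  finite_set X /\ infinite_set [set K | component X K /\ nbhd K = X].

End Sep.

(* Main.v *)
Require Import Defs.
From mathcomp Require Import all_boot.
From mathcomp Require Import boolp classical_sets cardinality.
From Stdlib Require Import Relations.
Local Open Scope classical_set_scope.

Arguments rt_trans {A R x y z}.
Arguments rt_step {A R x y}.
Arguments rt_refl {A R x}.
Arguments clos_rtn1_rt {A R x y}.
Arguments clos_rt_rtn1 {A R x y}.
Arguments Relation_Operators.rtn1_trans {A R x y z}.
Arguments Relation_Operators.rtn1_refl {A R x}.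

Set Implicit Arguments. Unset Strict Implicit.
Section Aux.
Variable G : graph.
Notation V := (vert G).
Notation rt Y := (clos_refl_trans V (step_out Y)).

Lemma rt_sym (Y : set V) a b : rt Y a b -> rt Y b a.
Proof.
elim=> [x y [h1 [h2 h3]]| x | x y z _ IH1 _ IH2].
- by apply: rt_step; split; [apply: adj_sym|split].
- exact: rt_refl.
- exact: rt_trans IH2 IH1.
Qed.

Lemma rt_notY (Y : set V) a b : rt Y a b -> ~ Y a -> ~ Y b.
Proof.
move=> H; have := clos_rt_rtn1 H; elim => // y z [_ [_ h]] _ _ _; exact: h.
Qed.

Lemma card_lt_sub (T : Type) (X Y : set T) k :
  finite_set X -> X `<=` Y -> card_lt Y k -> card_lt X k.
Proof.
move=> [m Xm] XY [n [nk Yn]]; exists m; split => //.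
have h1 : card_le `I_m X by move: (card_esym Xm); rewrite card_eq_le => /andP[].
have h2 : card_le X Y by apply: subset_card_le.
have h3 : card_le Y `I_n by move: Yn; rewrite card_eq_le => /andP[].
have := card_le_trans (card_le_trans h1 h2) h3.
rewrite card_le_II => mn; exact: leq_ltn_trans mn nk.
Qed.

Lemma card_lt_fin (T : Type) (X : set T) k : card_lt X k -> finite_set X.
Proof. by move=> [n [_ h]]; exists n. Qed.

Lemma sep_sym (A B : set V) : is_sep A B -> is_sep B A.
Proof.
move=> [hU hE]; split; first by rewrite setUC.
move=> x y hx hy hxy; apply: (hE y x hy hx); exact: adj_sym.
Qed.

Lemma side (Y A B : set V) a b : is_sep A B -> rt Y a b ->
  (forall w, rt Y a w -> ~ (A `&` B) w) -> (A `\` B) a -> (A `\` B) b.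
Proof.
move=> [hU hE] hab hw ha; have h := clos_rt_rtn1 hab; clear hab; elim: h => // y z hyz0 hr IH.
have hz : (A `|` B) z by rewrite hU.
have nz : ~ (A `&` B) z.
  apply: hw; apply: clos_rtn1_rt; exact: Relation_Operators.rtn1_trans hyz0 hr.
have hyz := hyz0.1.
have [Az|nAz] := pselect (A z).
  by split => // Bz; apply: nz.
case: hz => // Bz; exfalso; apply: (hE y z IH (conj Bz nAz) hyz).
Qed.

Lemma comp_eq (Y K : set V) z : component Y K -> K z ->
  K = [set y | ~ Y y /\ rt Y z y].
Proof.
move=> [x [nx ->]] [nz hz]; apply/seteqP; split => y [ny hy]; split => //.
  exact: rt_trans (rt_sym hz) hy.
exact: rt_trans hz hy.
Qed.

Lemma comp_sep (Y A B K : set V) : is_sep A B -> component Y K ->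
  (forall w, K w -> ~ (A `&` B) w) -> K `<=` A `\` B \/ K `<=` B `\` A.
Proof.
move=> hs [x [nx ->]] hK.
have Kx : ~ Y x /\ rt Y x x by split => //; apply: rt_refl.
have hx : (A `|` B) x by rewrite hs.1.
have hw : forall w, rt Y x w -> ~ (A `&` B) w.
  by move=> w hw; apply: hK; split => //; exact: rt_notY hw nx.
have [Ax|nAx] := pselect (A x).
  have nBx : ~ B x by move=> Bx; exact: (hw x rt_refl).
  by left => y [ny hy]; apply: side hs hy hw _.
case: hx => // Bx; right => y [ny hy]; apply: side (sep_sym hs) hy _ _ => //.
by move=> w /hw h [h1 h2]; apply: h.
Qed.

Lemma nb_side (A B K : set V) : is_sep A B -> K `<=` A `\` B -> nbhd K `<=` A.
Proof.
move=> [hU hE] hK y [nKy [x [Kx hxy]]].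
have hy : (A `|` B) y by rewrite hU.
have [Ay|nAy] := pselect (A y) => //.
case: hy => // By; exfalso; exact: (hE x y (hK x Kx) (conj By nAy) hxy).
Qed.

Lemma avoid (X Z : set V) : critical X -> finite_set Z ->
  exists K, component X K /\ nbhd K = X /\ (forall w, K w -> ~ Z w).
Proof.
move=> [_ hinf] hZ; apply: contrapT => H; apply: hinf.
apply: (sub_finite_set _ (finite_image (fun z => [set y | ~ X y /\ rt X z y]) hZ)).
move=> K [cK nK].
have [w [Kw Zw]] : exists w, K w /\ Z w.
  apply: contrapT => H2; apply: H; exists K; split => //; split => // w Kw Zw.
  by apply: H2; exists w.
by exists w => //; rewrite (comp_eq cK Kw).
Qed.

Lemma vecS_inv k (s : osep G) : vecS k s -> vecS k (Defs.inv s).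
Proof.
case: s => A B [hs ho]; split; first exact: sep_sym.
by rewrite /order_lt /= setIC.
Qed.

End Aux.

Theorem lemma3p7 (G : graph) (k : nat) (F : set (set (osep G))) (X : set G) :
  (forall sigma, F sigma ->
     star sigma /\ sigma `<=` @vecS G k /\ finite_set (interior sigma)) ->
  critical X -> ~ card_lt X k ->
  let tau := [set s | @vecS G k s /\ X `<=` s.2] in
  (F_tangle k F tau /\ principal k tau) /\
  (forall sigma, star sigma -> sigma `<=` @vecS G k ->
     X `<=` interior sigma -> sigma `<=` tau).
Proof.
move=> hF hX hXk tau.
have finX : finite_set X by case: hX.
have noAB : forall A B : set G, card_lt (A `&` B) k -> X `<=` A -> X `<=` B -> False.
  move=> A B hc hA hB; apply: hXk; apply: card_lt_sub finX _ hc.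
  by move=> x Xx; split; [apply: hA|apply: hB].
split; last first.
  move=> sigma _ hs hint s ss; split; first exact: hs.
  by move=> x /hint; apply.
split; last first.
  move=> Y hY.
  have [K' [cK' [nK' aK']]] := avoid hX (card_lt_fin hY).
  have cK'0 := cK'; case: cK'0 => [z [nXz eK']].
  have K'z : K' z by rewrite eK'; split => //; apply: rt_refl.
  have nYz : ~ Y z by apply: aK'.
  pose K := [set y | ~ Y y /\ clos_refl_trans G (step_out Y) z y].
  have cK : component Y K by exists z.
  have KY : forall y, K y -> ~ Y y by move=> y [].
  have Kcl : forall u y, K u -> adj u y -> ~ Y y -> K y.
    move=> u y [nu hu] huy ny; split => //; apply: rt_trans hu _; apply: rt_step.
    by split.
  exists K; split => //; split; last first.
    move=> x Xx /=; have [Yx|nYx] := pselect (Y x); first by right.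
    left; rewrite -nK' in Xx; case: Xx => [nK'x [u [K'u hux]]].
    have hu : clos_refl_trans G (step_out X) z u.
      by move: K'u; rewrite eK' => -[].
    have hw : forall w, clos_refl_trans G (step_out X) z w -> ~ Y w.
      move=> w hw; apply: aK'; rewrite eK'; split => //; exact: rt_notY hw nXz.
    have hzu : clos_refl_trans G (step_out Y) z u.
      move: hu => /clos_rt_rtn1 hu; apply: clos_rtn1_rt.
      have {}hw : forall w, clos_refl_trans_n1 G (step_out X) z w -> ~ Y w.
        by move=> w /clos_rtn1_rt; apply: hw.
      elim: hu hw => [|y w hs hr IH] hw; first exact: Relation_Operators.rtn1_refl.
      apply: Relation_Operators.rtn1_trans (IH hw); split; first exact: hs.1.
      split; first exact: hw y hr.
      by apply: hw; exact: Relation_Operators.rtn1_trans hs hr.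
    apply: (Kcl u x) hux nYx; split; last exact: hzu.
    exact: hw u hu.
  split.
    split.
      apply/seteqP; split => // v _ /=.
      by have [Kv|nKv] := pselect (K v); [right; left|left].
    move=> x y [nKx nKYx] [_ nnKy] hxy; apply: nKx.
    have Ky : K y by apply: contrapT.
    apply: (Kcl y x Ky (adj_sym hxy)) => hY'; apply: nKYx; by right.
  have finY := card_lt_fin hY.
  apply: card_lt_sub _ _ hY.
    apply: sub_finite_set _ finY.
    by move=> v /= [nKv [//|]].
  by move=> v /= [nKv [//|]].
split.
  split; first by move=> s [].
  move=> [A B] hs; split; last first.
    move=> [_ h1] [_ h2]; exfalso; apply: (noAB A B hs.2) => //.
  have [K [cK [nK aK]]] := avoid hX (card_lt_fin hs.2).
  case: (comp_sep hs.1 cK aK) => hK.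
    right; split; first exact: (vecS_inv hs).
    by rewrite /= -nK; apply: nb_side hs.1 hK.
  left; split => //=.
  by rewrite -nK; apply: nb_side (sep_sym hs.1) hK.
split.
  move=> [s [t [_ [ht [_ [[[h1 h2] _] [[_ HX1] [_ HX2]]]]]]]].
  apply: (noAB t.1 t.2 ht.2) => // x /HX1; exact: h1.
move=> sigma /hF [[_ [_ hstar]] [hsk hfin]] hsub.
have [K [cK [nK aK]]] := avoid hX hfin.
have cK0 := cK; case: cK0 => [x0 [nx0 eK]].
have Kx0 : K x0 by rewrite eK; split => //; apply: rt_refl.
have [[A B] [ss nB]] : exists s, sigma s /\ ~ s.2 x0.
  apply: contrapT => H; apply: (aK x0 Kx0) => s ss; apply: contrapT => h.
  by apply: H; exists s.
have hs := hsk _ ss.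
have hA : A x0.
  have : (A `|` B) x0 by rewrite hs.1.1.
  by case.
have aAB : forall w, K w -> ~ (A `&` B) w.
  move=> w Kw [Aw Bw]; apply: (aK w Kw) => t st.
  have [<-//|ne] := pselect ((A, B) = t).
  by have [h _] := hstar _ _ ss st ne; apply: h.
case: (comp_sep hs.1 cK aAB) => hK; last by case: (hK x0 Kx0).
apply: (noAB A B hs.2).
  by rewrite -nK; apply: nb_side hs.1 hK.
by have [_ /= h] := hsub _ ss.
Qed.
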